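(* Fix $p\in(0,1)$ and $\lambda\in\mathbb{R}$. For any fixed $T>0$ and $a\in(0,\frac{p}{1+p})$ there exist $b_{T,a}>0$ and $C_{T,a}>0$ such that for all $b\ge b_{T,a}$ and all $t\in[ap\log b,T+ap\log b]$: if $p\in(0,\frac12)$, then $$|\gamma_h(t)|\le C_{T,a}\left[(|\lambda|b^{-2p(1-a)}+b^{-4p(1-a)})e^{-t/p}+(|\lambda|b^{-2p}+b^{-4p})e^{t/p}\right];$$ if $p\in[\frac12,1)$, then $$|\gamma_h(t)|\le C_{T,a}\left[(|\lambda|b^{-2p(1-a)}+b^{-4p(1-a)})e^{-t/p}+(|\lambda|b^{-2p}+b^{-4p(1-a)})e^{t/p}\right].$$ The same bounds hold for $\gamma_h'(t)$.
   Context: Let $\Theta_h(t)=\dfrac{e^{t/p}}{(1+\alpha_pe^{2t})^{1/p}}$ with $\alpha_p=\frac{p^2}{4(1+p)}$. Let $\Sigma$ be a solution of the linear equation $\Sigma''-\frac{1}{p^2}\Sigma+(2p+1)\Theta_h^{2p}\Sigma=0$ normalized by the Wronskian relation $\Theta_h'(t)\Sigma'(t)-\Theta_h''(t)\Sigma(t)=1$ for all $t$ (the expression below does not depend on which such $\Sigma$ is chosen). Let $f_b(t)=-\lambda b^{-2p}e^{2t}+b^{-4p}e^{4t}$ and define $$\gamma_h(t)=\Sigma(t)\int_{-\infty}^t f_b(t')\Theta_h'(t')\Theta_h(t')\,dt'-\Theta_h'(t)\int_{-\infty}^t f_b(t')\Sigma(t')\Theta_h(t')\,dt'.$$ *)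

(* Defs.v *)
From Stdlib Require Import Reals Lra.
From Coquelicot Require Import Coquelicot.
Open Scope R_scope.

Definition alpha_p (p : R) : R := p ^ 2 / (4 * (1 + p)).

Definition Theta_h (p : R) (t : R) : R :=
  exp (t / p) / Rpower (1 + alpha_p p * exp (2 * t)) (1 / p).

Definition f_b (p lam b : R) (t : R) : R :=
  - lam * Rpower b (-2 * p) * exp (2 * t) + Rpower b (-4 * p) * exp (4 * t).

Definition int_from_minfty (g : R -> R) (t : R) : R :=
  RInt_gen g (Rbar_locally m_infty) (at_point t).

Definition gamma_h (p lam b : R) (Sigma : R -> R) (t : R) : R :=
  Sigma t * int_from_minfty (fun s => f_b p lam b s * Derive (Theta_h p) s * Theta_h p s) t
  - Derive (Theta_h p) t * int_from_minfty (fun s => f_b p lam b s * Sigma s * Theta_h p s) t.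

Definition is_Sigma (p : R) (Sigma : R -> R) : Prop :=
  (forall t, ex_derive Sigma t) /\
  (forall t, ex_derive (Derive Sigma) t) /\
  (forall t, Derive_n Sigma 2 t - / p ^ 2 * Sigma t
             + (2 * p + 1) * Rpower (Theta_h p t) (2 * p) * Sigma t = 0) /\
  (forall t, Derive (Theta_h p) t * Derive Sigma t
             - Derive_n (Theta_h p) 2 t * Sigma t = 1).

Definition bound_small (p lam b t a : R) : R :=
  (Rabs lam * Rpower b (-2 * p * (1 - a)) + Rpower b (-4 * p * (1 - a))) * exp (- t / p)
  + (Rabs lam * Rpower b (-2 * p) + Rpower b (-4 * p)) * exp (t / p).

Definition bound_large (p lam b t a : R) : R :=
  (Rabs lam * Rpower b (-2 * p * (1 - a)) + Rpower b (-4 * p * (1 - a))) * exp (- t / p)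
  + (Rabs lam * Rpower b (-2 * p) + Rpower b (-4 * p * (1 - a))) * exp (t / p).

(* Main.v *)
Require Import Defs.
From Stdlib Require Import Reals Lra Psatz.
From Coquelicot Require Import Coquelicot.
Open Scope R_scope.

Lemma exp_mono x y : x <= y -> exp x <= exp y.
Proof. intros H; destruct H as [H|H]; [left; apply exp_increasing; auto|subst; lra]. Qed.

Lemma exp_minus_div x y : exp (x - y) = exp x / exp y.
Proof. unfold Rminus; rewrite exp_plus, exp_Ropp; field; apply Rgt_not_eq, exp_pos. Qed.

Section Th.
Variable p : R.
Hypothesis Hp : 0 < p < 1.

Definition al := alpha_p p.
Lemma al_pos : 0 < al.
Proof. unfold al, alpha_p. apply Rdiv_lt_0_compat; nra. Qed.

Definition XX t := 1 + al * exp (2 * t).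
Lemma XX_pos t : 0 < XX t.
Proof. unfold XX; pose proof al_pos; pose proof (exp_pos (2*t)); nra. Qed.

Definition psi t := (1 - al * exp (2 * t)) / (p * XX t).
Definition dpsi t := - (4 * al * exp (2 * t)) / (p * (XX t)^2).

Lemma Theta_exp t : Theta_h p t = exp (t / p - / p * ln (1 + al * exp (2 * t))).
Proof.
  unfold Theta_h, Rpower. rewrite exp_minus_div. fold al. f_equal. f_equal. field. lra.
Qed.

Lemma Theta_pos t : 0 < Theta_h p t.
Proof. rewrite Theta_exp; apply exp_pos. Qed.

Lemma Theta_der t : is_derive (Theta_h p) t (Theta_h p t * psi t).
Proof.
  eapply is_derive_ext. intro s; symmetry; apply Theta_exp.
  pose proof (XX_pos t) as HX. unfold XX in HX.
  auto_derive. lra.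
  rewrite Theta_exp. unfold Rdiv, Rminus, psi, XX. field. split; lra.
Qed.

Lemma psi_der t : is_derive psi t (dpsi t).
Proof.
  pose proof (XX_pos t) as HX. unfold psi, dpsi, XX in *.
  auto_derive. apply Rgt_not_eq; nra. field. lra.
Qed.

Definition uu t := Theta_h p t * psi t.
Definition duu t := Theta_h p t * (psi t ^ 2 + dpsi t).

Lemma uu_der t : is_derive uu t (duu t).
Proof.
  unfold uu, duu. eapply is_derive_ext. intros s; reflexivity.
  replace (Theta_h p t * (psi t ^ 2 + dpsi t)) with
     ((Theta_h p t * psi t) * psi t + Theta_h p t * dpsi t) by ring.
  apply (is_derive_mult (Theta_h p) psi t); [apply Theta_der|apply psi_der|].
  intros; apply Rmult_comm.
Qed.

Lemma DTheta t : Derive (Theta_h p) t = uu t.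
Proof. apply is_derive_unique, Theta_der. Qed.

Lemma D2Theta t : Derive_n (Theta_h p) 2 t = duu t.
Proof. simpl. rewrite (Derive_ext _ uu). apply is_derive_unique, uu_der. apply DTheta. Qed.


Lemma ln_XX_ge0 t : 0 <= ln (1 + al * exp (2 * t)).
Proof. rewrite <- ln_1. apply ln_le; [lra|]. pose proof al_pos; pose proof (exp_pos (2*t)); nra. Qed.

Lemma Theta_le1 t : Theta_h p t <= exp (t / p).
Proof.
  rewrite Theta_exp. apply exp_mono. pose proof (ln_XX_ge0 t).
  assert (0 < / p) by (apply Rinv_0_lt_compat; lra). nra.
Qed.

Definition AA := exp (- ln al / p).
Lemma AA_pos : 0 < AA. Proof. apply exp_pos. Qed.

Lemma Theta_le2 t : Theta_h p t <= AA * exp (- t / p).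
Proof.
  rewrite Theta_exp. unfold AA. rewrite <- exp_plus. apply exp_mono.
  assert (H : ln al + 2 * t <= ln (1 + al * exp (2 * t))).
  { rewrite <- (ln_exp (2*t)) at 1. rewrite <- ln_mult by (apply al_pos || apply exp_pos).
    apply ln_le. pose proof al_pos; pose proof (exp_pos (2*t)); nra. lra. }
  assert (0 < / p) by (apply Rinv_0_lt_compat; lra).
  unfold Rdiv. assert (0 <= / p * (ln (1 + al * exp (2 * t)) - ln al - 2 * t)) by (apply Rmult_le_pos; lra). nra.
Qed.

Lemma Theta_P t : Theta_h p t * exp (t / p) <= AA.
Proof.
  pose proof (Theta_le2 t). pose proof (exp_pos (t/p)).
  replace AA with (AA * exp (- t / p) * exp (t / p)).
  apply Rmult_le_compat_r; lra.
  rewrite Rmult_assoc, <- exp_plus. replace (- t / p + t / p) with 0 by (field; lra).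
  rewrite exp_0; ring.
Qed.

Lemma Theta_Q t : Theta_h p t * exp (- t / p) <= 1.
Proof.
  pose proof (Theta_le1 t). pose proof (exp_pos (- t/p)).
  replace 1 with (exp (t / p) * exp (- t / p)).
  apply Rmult_le_compat_r; lra.
  rewrite <- exp_plus. replace (t / p + - t / p) with 0 by (field; lra). apply exp_0.
Qed.

Lemma Rabs_div_le n d m : 0 < d -> Rabs n <= m * d -> Rabs (n / d) <= m.
Proof.
  intros Hd H. rewrite Rabs_div by lra. rewrite (Rabs_pos_eq d) by lra.
  apply Rmult_le_reg_r with d; auto. unfold Rdiv; rewrite Rmult_assoc, Rinv_l; lra.
Qed.

Lemma psi_abs t : Rabs (psi t) <= / p.
Proof.
  unfold psi. apply Rabs_div_le. pose proof (XX_pos t); nra.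
  unfold XX. pose proof al_pos; pose proof (exp_pos (2*t)).
  replace (/ p * (p * (1 + al * exp (2 * t)))) with (1 + al * exp (2 * t)) by (field; lra).
  apply Rabs_le; nra.
Qed.

Lemma dpsi_abs t : Rabs (dpsi t) <= / p.
Proof.
  unfold dpsi. apply Rabs_div_le. apply Rmult_lt_0_compat; [lra|apply pow_lt, XX_pos].
  unfold XX. pose proof al_pos; pose proof (exp_pos (2*t)).
  replace (/ p * (p * (1 + al * exp (2 * t)) ^ 2)) with ((1 + al * exp (2 * t))^2) by (field; lra).
  assert (0 <= (1 - al * exp (2 * t))^2) by apply pow2_ge_0. assert (0 <= al * exp (2 * t)) by nra. apply Rabs_le; split; nra.
Qed.

Lemma uu_abs t : Rabs (uu t) <= Theta_h p t / p.
Proof.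
  unfold uu. rewrite Rabs_mult, (Rabs_pos_eq (Theta_h p t)) by (left; apply Theta_pos).
  pose proof (psi_abs t). pose proof (Theta_pos t). unfold Rdiv. nra.
Qed.

Lemma duu_abs t : Rabs (duu t) <= Theta_h p t * (/ p ^ 2 + / p).
Proof.
  unfold duu. rewrite Rabs_mult, (Rabs_pos_eq (Theta_h p t)) by (left; apply Theta_pos).
  pose proof (psi_abs t). pose proof (dpsi_abs t). pose proof (Theta_pos t).
  apply Rmult_le_compat_l; [lra|].
  eapply Rle_trans; [apply Rabs_triang|]. rewrite <- RPow_abs.
  assert (0 <= Rabs (psi t)) by apply Rabs_pos.
  assert (Rabs (psi t) ^ 2 <= / p ^ 2). { replace (/ p ^ 2) with ((/ p) ^ 2) by (field; lra). apply pow_incr; lra. }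
  lra.
Qed.

Definition t1 := (ln 3 - ln al) / 2.
Definition t2 := (- ln 3 - ln al) / 2.

Lemma t1_prop t : t1 <= t -> 3 <= al * exp (2 * t).
Proof.
  intros H. pose proof al_pos.
  assert (exp (ln 3 - ln al) <= exp (2 * t)) by (apply exp_mono; unfold t1 in H; lra).
  rewrite exp_minus_div, !exp_ln in H1 by (lra||auto).
  apply Rmult_le_compat_l with (r := al) in H1; [|lra].
  replace (al * (3 / al)) with 3 in H1 by (field; lra). lra.
Qed.

Lemma t2_prop t : t <= t2 -> al * exp (2 * t) <= / 3.
Proof.
  intros H. pose proof al_pos.
  assert (exp (2 * t) <= exp (- ln 3 - ln al)) by (apply exp_mono; unfold t2 in H; lra).
  unfold Rminus in H1. rewrite exp_plus, !exp_Ropp, !exp_ln in H1 by (lra||auto).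
  apply Rmult_le_compat_l with (r := al) in H1; [|lra].
  replace (al * (/ 3 * / al)) with (/3) in H1 by (field; lra). lra.
Qed.

Lemma t2_le_t1 : t2 < t1.
Proof. unfold t1, t2. assert (0 < ln 3) by (rewrite <- ln_1; apply ln_increasing; lra). lra. Qed.

Definition cP := exp (- ln (2 * al) / p) / (2 * p).
Definition cM := exp (- ln 2 / p) / (2 * p).
Lemma cP_pos : 0 < cP. Proof. unfold cP; apply Rdiv_lt_0_compat; [apply exp_pos|lra]. Qed.
Lemma cM_pos : 0 < cM. Proof. unfold cM; apply Rdiv_lt_0_compat; [apply exp_pos|lra]. Qed.

Lemma uu_t1 t : t1 <= t -> uu t <= - cP * exp (- t / p).
Proof.
  intros H. pose proof (t1_prop t H) as H3. pose proof al_pos. pose proof (exp_pos (2*t)).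
  assert (Hth : exp (- ln (2 * al) / p) * exp (- t / p) <= Theta_h p t).
  { rewrite Theta_exp, <- exp_plus. apply exp_mono.
    assert (ln (1 + al * exp (2 * t)) <= ln (2 * al) + 2 * t).
    { rewrite <- (ln_exp (2*t)) at 2. rewrite <- ln_mult by (lra || apply exp_pos).
      apply ln_le; nra. }
    assert (0 < / p) by (apply Rinv_0_lt_compat; lra).
    unfold Rdiv. assert (0 <= / p * (ln (2 * al) + 2 * t - ln (1 + al * exp (2 * t)))) by (apply Rmult_le_pos; lra). nra. }
  assert (Hps : psi t <= - / (2 * p)).
  { unfold psi, XX. apply Rmult_le_reg_r with (p * (1 + al * exp (2 * t))). nra.
    unfold Rdiv. rewrite Rmult_assoc, Rinv_l by nra. field_simplify; [|lra]. 
    apply Rmult_le_reg_r with 2; [lra|]. field_simplify; lra. }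
  unfold uu, cP. pose proof (Theta_pos t).
  assert (0 < / (2*p)) by (apply Rinv_0_lt_compat; lra).
  unfold Rdiv at 2. nra.
Qed.

Lemma uu_t2 t : t <= t2 -> cM * exp (t / p) <= uu t.
Proof.
  intros H. pose proof (t2_prop t H) as H3. pose proof al_pos. pose proof (exp_pos (2*t)).
  assert (Hth : exp (- ln 2 / p) * exp (t / p) <= Theta_h p t).
  { rewrite Theta_exp, <- exp_plus. apply exp_mono.
    assert (ln (1 + al * exp (2 * t)) <= ln 2) by (apply ln_le; nra).
    assert (0 < / p) by (apply Rinv_0_lt_compat; lra).
    unfold Rdiv. assert (0 <= / p * (ln 2 - ln (1 + al * exp (2 * t)))) by (apply Rmult_le_pos; lra). nra. }
  assert (Hps : / (2 * p) <= psi t).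
  { unfold psi, XX. apply Rmult_le_reg_r with (p * (1 + al * exp (2 * t))). apply Rmult_lt_0_compat; [lra|nra].
    unfold Rdiv. rewrite Rmult_assoc, Rinv_l by (apply Rgt_not_eq, Rmult_lt_0_compat; [lra|nra]). 
    replace (/ (2 * p) * (p * (1 + al * exp (2 * t)))) with ((1 + al * exp (2 * t))/2) by (field; lra). lra. }
  unfold uu, cM. pose proof (Theta_pos t).
  assert (0 < / (2*p)) by (apply Rinv_0_lt_compat; lra).
  unfold Rdiv at 1. nra.
Qed.

End Th.

Lemma is_derive_cpt f x l : is_derive f x l -> continuity_pt f x.
Proof. intros H. apply continuity_pt_filterlim. apply (ex_derive_continuous (K:=R_AbsRing) (V:=R_NormedModule)). exists l; auto. Qed.

Lemma mono f df a b : a <= b ->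
  (forall x, a <= x <= b -> is_derive f x (df x)) ->
  (forall x, a <= x <= b -> 0 <= df x) -> f a <= f b.
Proof.
  intros Hab Hd Hp.
  destruct (MVT_gen f a b df) as [c [Hc Heq]].
  - intros x Hx. rewrite Rmin_left, Rmax_right in Hx by lra. apply Hd; lra.
  - intros x Hx. rewrite Rmin_left, Rmax_right in Hx by lra. eapply is_derive_cpt, Hd; lra.
  - rewrite Rmin_left, Rmax_right in Hc by lra.
    assert (0 <= df c * (b - a)) by (apply Rmult_le_pos; [apply Hp; lra|lra]). lra.
Qed.

Lemma bounded_ab f a b : a <= b -> (forall x, continuous f x) ->
  exists M, 0 <= M /\ forall x, a <= x <= b -> Rabs (f x) <= M.
Proof.
  intros Hab Hc.
  destruct (continuity_ab_maj (fun x => Rabs (f x)) a b Hab) as [Mx [HM _]].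
  - intros c _. apply (continuity_pt_comp f Rabs). apply continuity_pt_filterlim, Hc.
    apply Rcontinuity_abs.
  - exists (Rabs (f Mx)). split; [apply Rabs_pos|]. auto.
Qed.

Lemma exp_2 x : exp (2 * x) = exp x ^ 2.
Proof. replace (2*x) with (x + x) by ring. rewrite exp_plus. ring. Qed.

Lemma exp_yz x : exp x * exp (- x) = 1.
Proof. rewrite <- exp_plus. replace (x + - x) with 0 by ring. apply exp_0. Qed.

Section Sig.
Variable p : R.
Hypothesis Hp : 0 < p < 1.
Variable Sigma : R -> R.
Hypothesis HS1 : forall t, ex_derive Sigma t.
Hypothesis HS2 : forall t, ex_derive (Derive Sigma) t.
Hypothesis HW : forall t, uu p t * Derive Sigma t - duu p t * Sigma t = 1.

Definition EE t := exp (t / p) + exp (- t / p).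

Lemma EE_pos t : 0 < EE t.
Proof. unfold EE. pose proof (exp_pos (t/p)); pose proof (exp_pos (-t/p)); lra. Qed.

Lemma EE_ge1 t : 1 <= EE t.
Proof.
  unfold EE. pose proof (exp_pos (t/p)); pose proof (exp_pos (-t/p)).
  assert (exp (t/p) * exp (-t/p) = 1) by (replace (-t/p) with (-(t/p)) by (field; lra); apply exp_yz).
  nra.
Qed.

Definition hh t := Sigma t / uu p t.

Lemma hh_der x : uu p x <> 0 -> is_derive hh x (/ (uu p x ^ 2)).
Proof.
  intros Hu. unfold hh.
  replace (/ uu p x ^ 2) with ((Derive Sigma x * uu p x - Sigma x * duu p x) / uu p x ^ 2).
  apply is_derive_div; auto. apply Derive_correct, HS1. apply uu_der; auto.
  assert (E: Derive Sigma x * uu p x - Sigma x * duu p x = 1) by (rewrite <- (HW x); ring). rewrite E. field. auto.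
Qed.

Lemma yz_ident t : exp (t / p) * exp (- t / p) = 1.
Proof. replace (-t/p) with (-(t/p)) by (field; lra); apply exp_yz. Qed.

Lemma Sig_plus : exists C, 0 <= C /\ forall t, t1 p <= t -> Rabs (Sigma t) <= C * EE t.
Proof.
  pose (K := p / (2 * cP p ^ 2)).
  pose proof (cP_pos p Hp) as HcP.
  assert (Hu : forall x, t1 p <= x -> uu p x < 0).
  { intros x Hx. pose proof (uu_t1 p Hp x Hx). pose proof (exp_pos (-x/p)). nra. }
  assert (Hinv : forall x, t1 p <= x -> / uu p x ^ 2 <= exp (x / p) ^ 2 / cP p ^ 2).
  { intros x Hx. pose proof (uu_t1 p Hp x Hx). pose proof (Hu x Hx).
    pose proof (exp_pos (-x/p)). pose proof (exp_pos (x/p)). pose proof (yz_ident x).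
    assert (cP p * exp (- x / p) <= - uu p x) by lra.
    assert ((cP p * exp (- x / p))^2 <= uu p x ^ 2). { replace (uu p x ^ 2) with ((- uu p x)^2) by ring. apply pow_incr; split; [nra|lra]. }
    apply Rmult_le_reg_r with (uu p x ^ 2 * cP p ^ 2). apply Rmult_lt_0_compat; nra.
    field_simplify; try lra.
    replace (exp (x / p) ^ 2 * uu p x ^ 2) with (exp (x/p)^2 * uu p x ^ 2) by ring.
    assert (cP p ^ 2 = (exp (x / p) * (cP p * exp (- x / p)))^2).
    { replace (exp (x / p) * (cP p * exp (- x / p))) with (cP p * (exp (x/p) * exp (-x/p))) by ring.
      rewrite yz_ident. ring. }
    rewrite H6, Rpow_mult_distr, (Rmult_comm (uu p x ^ 2)). apply Rmult_le_compat_l; [apply pow_le; lra|]. auto. }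
  exists (AA p / p * (Rabs (hh (t1 p)) + K)). split.
  { apply Rmult_le_pos. unfold Rdiv; apply Rmult_le_pos; [left; apply AA_pos|left; apply Rinv_0_lt_compat; lra].
    assert (0 <= K) by (unfold K; apply Rmult_le_pos; [lra| left; apply Rinv_0_lt_compat; nra]).
    pose proof (Rabs_pos (hh (t1 p))). lra. }
  intros t Ht.
  assert (H1 : hh (t1 p) <= hh t).
  { apply (mono hh (fun x => / uu p x ^ 2)); auto.
    intros x Hx; apply hh_der. pose proof (Hu x (proj1 Hx)); lra.
    intros x Hx. left. apply Rinv_0_lt_compat. pose proof (Hu x (proj1 Hx)). nra. }
  assert (H2 : K * exp (2 * t1 p / p) - hh (t1 p) <= K * exp (2 * t / p) - hh t).
  { apply (mono (fun x => K * exp (2 * x / p) - hh x)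
                (fun x => K * (2 / p * exp (2 * x / p)) - / uu p x ^ 2)); auto.
    intros x Hx. apply (is_derive_minus (fun x => K * exp (2 * x / p)) hh).
    auto_derive; auto. unfold Rdiv; ring. apply hh_der. pose proof (Hu x (proj1 Hx)); lra.
    intros x Hx. pose proof (Hinv x (proj1 Hx)).
    replace (2 * x / p) with (2 * (x / p)) by (field; lra). rewrite exp_2.
    replace (K * (2 / p * exp (x / p) ^ 2)) with (exp (x / p) ^ 2 / cP p ^ 2).
    lra. unfold K. field. split; lra. }
  assert (Hh : Rabs (hh t) <= Rabs (hh (t1 p)) + K * exp (t/p)^2).
  { pose proof (exp_pos (2 * t1 p / p)).
    assert (0 <= K) by (unfold K; apply Rmult_le_pos; [lra| left; apply Rinv_0_lt_compat; nra]).
    replace (2 * t / p) with (2 * (t / p)) in H2 by (field; lra). rewrite exp_2 in H2.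
    pose proof (Rle_abs (hh (t1 p))). pose proof (Rabs_pos (hh (t1 p))).
    assert (0 <= K * exp (2 * t1 p / p)) by nra.
    apply Rabs_le. split. pose proof (Rabs_le_between (hh (t1 p)) (Rabs (hh (t1 p)))) as [HH _].
    specialize (HH (Rle_refl _)). nra. lra. }
  assert (HS : Sigma t = uu p t * hh t) by (unfold hh; field; pose proof (Hu t Ht); lra).
  rewrite HS, Rabs_mult.
  pose proof (uu_abs p Hp t). pose proof (Theta_le2 p Hp t).
  pose proof (exp_pos (-t/p)). pose proof (exp_pos (t/p)). pose proof (yz_ident t).
  assert (Habs : Rabs (uu p t) <= AA p / p * exp (- t / p)).
  { eapply Rle_trans; [apply H|]. unfold Rdiv. assert (0 < /p) by (apply Rinv_0_lt_compat; lra). nra. }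
  assert (0 <= K) by (unfold K; apply Rmult_le_pos; [lra| left; apply Rinv_0_lt_compat; nra]).
  assert (0 <= AA p / p) by (unfold Rdiv; apply Rmult_le_pos; [left; apply AA_pos|left; apply Rinv_0_lt_compat; lra]).
  eapply Rle_trans. apply Rmult_le_compat; try apply Rabs_pos. apply Habs. apply Hh.
  unfold EE. pose proof (Rabs_pos (hh (t1 p))).
  replace (AA p / p * exp (- t / p) * (Rabs (hh (t1 p)) + K * exp (t / p) ^ 2))
    with (AA p / p * (Rabs (hh (t1 p)) * exp (- t / p) + K * exp (t / p) * (exp (t/p) * exp (-t/p)))) by ring.
  rewrite H5, (Rmult_assoc (AA p / p) (Rabs (hh (t1 p)) + K)). apply Rmult_le_compat_l; auto. nra.
Qed.


Lemma Sig_minus : exists C, 0 <= C /\ forall t, t <= t2 p -> Rabs (Sigma t) <= C * EE t.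
Proof.
  pose (K := p / (2 * cM p ^ 2)).
  pose proof (cM_pos p Hp) as HcM.
  assert (HK : 0 <= K) by (unfold K; apply Rmult_le_pos; [lra| left; apply Rinv_0_lt_compat; apply Rmult_lt_0_compat; [lra|apply pow_lt; lra]]).
  assert (Hu : forall x, x <= t2 p -> 0 < uu p x).
  { intros x Hx. pose proof (uu_t2 p Hp x Hx). pose proof (exp_pos (x/p)). nra. }
  assert (Hinv : forall x, x <= t2 p -> / uu p x ^ 2 <= exp (- x / p) ^ 2 / cM p ^ 2).
  { intros x Hx. pose proof (uu_t2 p Hp x Hx). pose proof (Hu x Hx).
    pose proof (exp_pos (-x/p)). pose proof (exp_pos (x/p)). pose proof (yz_ident x).
    assert ((cM p * exp (x / p))^2 <= uu p x ^ 2). { apply pow_incr; split; [nra|lra]. }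
    apply Rmult_le_reg_r with (uu p x ^ 2 * cM p ^ 2). apply Rmult_lt_0_compat; apply pow_lt; lra.
    field_simplify; try lra.
    assert (cM p ^ 2 = (exp (- x / p) * (cM p * exp (x / p)))^2).
    { replace (exp (- x / p) * (cM p * exp (x / p))) with (cM p * (exp (x/p) * exp (-x/p))) by ring.
      rewrite yz_ident. ring. }
    rewrite H5, Rpow_mult_distr, (Rmult_comm (uu p x ^ 2)). apply Rmult_le_compat_l; [apply pow_le; lra|]. auto. }
  exists (/ p * (Rabs (hh (t2 p)) + K)). split.
  { apply Rmult_le_pos. left; apply Rinv_0_lt_compat; lra.
    pose proof (Rabs_pos (hh (t2 p))). lra. }
  intros t Ht.
  assert (H1 : hh t <= hh (t2 p)).
  { apply (mono hh (fun x => / uu p x ^ 2)); auto.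
    intros x Hx; apply hh_der. pose proof (Hu x (proj2 Hx)); lra.
    intros x Hx. left. apply Rinv_0_lt_compat. pose proof (Hu x (proj2 Hx)). apply pow_lt; lra. }
  assert (H2 : - hh t - K * exp (- 2 * t / p) <= - hh (t2 p) - K * exp (- 2 * t2 p / p)).
  { apply (mono (fun x => - hh x - K * exp (- 2 * x / p))
                (fun x => - / uu p x ^ 2 + K * (2 / p * exp (- 2 * x / p)))); auto.
    intros x Hx. eapply is_derive_ext. intros y. unfold minus, plus, opp; simpl; reflexivity.
    replace (- / uu p x ^ 2 + K * (2 / p * exp (- 2 * x / p))) with
       (- / uu p x ^ 2 - (K * (- 2 / p * exp (- 2 * x / p)))) by (unfold Rdiv; ring).
    apply (is_derive_minus (fun x => - hh x) (fun x => K * exp (- 2 * x / p))).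
    apply (is_derive_opp hh). apply hh_der. pose proof (Hu x (proj2 Hx)); lra.
    auto_derive; auto. unfold Rdiv; ring.
    intros x Hx. pose proof (Hinv x (proj2 Hx)).
    replace (- 2 * x / p) with (2 * (- x / p)) by (field; lra). rewrite exp_2.
    replace (K * (2 / p * exp (- x / p) ^ 2)) with (exp (- x / p) ^ 2 / cM p ^ 2).
    lra. unfold K. field. split; lra. }
  assert (Hh : Rabs (hh t) <= Rabs (hh (t2 p)) + K * exp (- t/p)^2).
  { pose proof (exp_pos (- 2 * t2 p / p)).
    replace (- 2 * t / p) with (2 * (- t / p)) in H2 by (field; lra). rewrite exp_2 in H2.
    pose proof (Rle_abs (hh (t2 p))). pose proof (Rabs_pos (hh (t2 p))).
    assert (0 <= K * exp (- 2 * t2 p / p)) by nra.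
    pose proof (Rabs_le_between (hh (t2 p)) (Rabs (hh (t2 p)))) as [HH _].
    specialize (HH (Rle_refl _)).
    assert (0 <= K * exp (- t / p) ^ 2) by (apply Rmult_le_pos; [lra| apply pow_le; left; apply exp_pos]).
    apply Rabs_le. split; lra. }
  assert (HS : Sigma t = uu p t * hh t) by (unfold hh; field; pose proof (Hu t Ht); lra).
  rewrite HS, Rabs_mult.
  pose proof (uu_abs p Hp t). pose proof (Theta_le1 p Hp t).
  pose proof (exp_pos (-t/p)). pose proof (exp_pos (t/p)). pose proof (yz_ident t).
  assert (Hip : 0 < / p) by (apply Rinv_0_lt_compat; lra).
  assert (Habs : Rabs (uu p t) <= / p * exp (t / p)).
  { eapply Rle_trans; [apply H|]. unfold Rdiv. nra. }
  eapply Rle_trans. apply Rmult_le_compat; try apply Rabs_pos. apply Habs. apply Hh.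
  unfold EE. pose proof (Rabs_pos (hh (t2 p))).
  replace (/ p * exp (t / p) * (Rabs (hh (t2 p)) + K * exp (- t / p) ^ 2))
    with (/ p * (Rabs (hh (t2 p)) * exp (t / p) + K * exp (- t / p) * (exp (t/p) * exp (-t/p)))) by ring.
  rewrite H5, (Rmult_assoc (/ p) (Rabs (hh (t2 p)) + K)). apply Rmult_le_compat_l; [lra|]. nra.
Qed.


Lemma EE_ge_y t : exp (t / p) <= EE t.
Proof. unfold EE; pose proof (exp_pos (-t/p)); lra. Qed.
Lemma EE_ge_z t : exp (- t / p) <= EE t.
Proof. unfold EE; pose proof (exp_pos (t/p)); lra. Qed.

Lemma mid_bound f : (forall x, continuous f x) ->
  exists C, 0 <= C /\ forall t, t2 p <= t <= t1 p -> Rabs (f t) <= C * EE t.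
Proof.
  intros Hc. destruct (bounded_ab f (t2 p) (t1 p)) as [M [HM HMb]]; auto.
  left; apply t2_le_t1.
  exists M; split; auto. intros t Ht. pose proof (HMb t Ht). pose proof (EE_ge1 t). nra.
Qed.

Lemma Sig_bound : exists S, 0 <= S /\ forall t, Rabs (Sigma t) <= S * EE t.
Proof.
  destruct Sig_plus as [C1 [HC1 H1]]. destruct Sig_minus as [C2 [HC2 H2]].
  destruct (mid_bound Sigma) as [C3 [HC3 H3]].
  { intros x. apply (ex_derive_continuous (K:=R_AbsRing) (V:=R_NormedModule)), HS1. }
  exists (C1 + C2 + C3). split; [lra|]. intros t. pose proof (EE_pos t).
  destruct (Rle_dec (t1 p) t). pose proof (H1 t r). nra.
  destruct (Rle_dec t (t2 p)). pose proof (H2 t r). nra.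
  pose proof (H3 t (conj (Rlt_le _ _ (Rnot_le_lt _ _ n0)) (Rlt_le _ _ (Rnot_le_lt _ _ n)))). nra.
Qed.

Lemma ThetaEE t : Theta_h p t * EE t <= AA p + 1.
Proof. unfold EE. pose proof (Theta_P p Hp t). pose proof (Theta_Q p Hp t). lra. Qed.

Lemma Sigp_bound : exists S, 0 <= S /\ forall t, Rabs (Derive Sigma t) <= S * EE t.
Proof.
  destruct Sig_bound as [S [HS HSb]].
  pose (N := 1 + (/ p ^ 2 + / p) * S * (AA p + 1)).
  assert (HD : 0 < / p ^ 2 + / p).
  { assert (0 < /p) by (apply Rinv_0_lt_compat; lra). assert (0 < / p ^ 2) by (apply Rinv_0_lt_compat, pow_lt; lra). lra. }
  assert (HN : 1 <= N).
  { unfold N. pose proof (AA_pos p). assert (0 <= (/ p ^ 2 + / p) * S * (AA p + 1)).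
    apply Rmult_le_pos; [apply Rmult_le_pos|]; lra. lra. }
  assert (Haux : forall t, uu p t <> 0 -> Rabs (Derive Sigma t) * Rabs (uu p t) <= N).
  { intros t Hu. rewrite <- Rabs_mult.
    assert (uu p t * Derive Sigma t = 1 + duu p t * Sigma t) by (rewrite <- (HW t); ring).
    rewrite Rmult_comm, H. eapply Rle_trans; [apply Rabs_triang|]. rewrite Rabs_R1, Rabs_mult.
    unfold N. apply Rplus_le_compat_l.
    pose proof (duu_abs p Hp t). pose proof (HSb t). pose proof (ThetaEE t). pose proof (Theta_pos p Hp t).
    pose proof (EE_pos t).
    eapply Rle_trans. apply Rmult_le_compat; try apply Rabs_pos. apply H0. apply H1.
    replace (Theta_h p t * (/ p ^ 2 + / p) * (S * EE t)) with ((/ p ^ 2 + / p) * S * (Theta_h p t * EE t)) by ring.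
    apply Rmult_le_compat_l; auto. apply Rmult_le_pos; lra. }
  destruct (mid_bound (Derive Sigma)) as [C3 [HC3 H3]].
  { intros x. apply (ex_derive_continuous (K:=R_AbsRing) (V:=R_NormedModule)), HS2. }
  pose proof (cP_pos p Hp). pose proof (cM_pos p Hp).
  exists (N / cP p + N / cM p + C3). split.
  { assert (0 <= N / cP p) by (apply Rdiv_le_0_compat; lra).
    assert (0 <= N / cM p) by (apply Rdiv_le_0_compat; lra). lra. }
  intros t. pose proof (EE_pos t).
  assert (0 <= N / cP p) by (apply Rdiv_le_0_compat; lra).
  assert (0 <= N / cM p) by (apply Rdiv_le_0_compat; lra).
  pose proof (exp_pos (t/p)); pose proof (exp_pos (-t/p)). pose proof (yz_ident t).
  destruct (Rle_dec (t1 p) t).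
  { pose proof (uu_t1 p Hp t r).
    assert (Hl : cP p * exp (- t / p) <= Rabs (uu p t)).
    { rewrite Rabs_left1. lra. nra. }
    assert (Hne : uu p t <> 0) by nra.
    pose proof (Haux t Hne) as Hax.
    assert (Rabs (Derive Sigma t) <= N / cP p * exp (t / p)).
    { apply Rmult_le_reg_r with (cP p * exp (- t / p)). nra.
      pose proof (Rabs_pos (Derive Sigma t)).
      replace (N / cP p * exp (t / p) * (cP p * exp (- t / p))) with (N * (exp (t / p) * exp (- t / p))) by (field; lra).
      rewrite yz_ident. nra. }
    pose proof (EE_ge_y t). nra. }
  destruct (Rle_dec t (t2 p)).
  { pose proof (uu_t2 p Hp t r).
    assert (Hl : cM p * exp (t / p) <= Rabs (uu p t)).
    { rewrite Rabs_right. lra. nra. }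
    assert (Hne : uu p t <> 0) by nra.
    pose proof (Haux t Hne) as Hax.
    assert (Rabs (Derive Sigma t) <= N / cM p * exp (- t / p)).
    { apply Rmult_le_reg_r with (cM p * exp (t / p)). nra.
      pose proof (Rabs_pos (Derive Sigma t)).
      replace (N / cM p * exp (- t / p) * (cM p * exp (t / p))) with (N * (exp (t / p) * exp (- t / p))) by (field; lra).
      rewrite yz_ident. nra. }
    pose proof (EE_ge_z t). nra. }
  pose proof (H3 t (conj (Rlt_le _ _ (Rnot_le_lt _ _ n0)) (Rlt_le _ _ (Rnot_le_lt _ _ n)))). nra.
Qed.

End Sig.

Lemma is_RInt_exp c k a b : k <> 0 ->
  is_RInt (fun s => c * exp (k * s)) a b (c * (exp (k * b) - exp (k * a)) / k).
Proof.
  intros Hk.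
  replace (c * (exp (k * b) - exp (k * a)) / k) with
    (minus (c / k * exp (k * b)) (c / k * exp (k * a))) by (unfold minus, plus, opp; simpl; field; auto).
  apply (is_RInt_derive (fun s => c / k * exp (k * s))).
  intros x _. auto_derive; auto. field; auto.
  intros x _. apply (continuous_comp (fun s => k * s) (fun y => c * exp y)).
  apply (continuous_mult (fun _ => k) (fun s => s)). apply continuous_const. apply continuous_id.
  apply continuity_pt_filterlim. apply derivable_continuous_pt.
  apply derivable_pt_scal, derivable_pt_exp.
Qed.

Lemma RInt_bound2 g a b c1 c2 k1 k2 : a <= b -> k1 <> 0 -> k2 <> 0 ->
  (forall s, continuous g s) ->
  (forall s, a <= s <= b -> Rabs (g s) <= c1 * exp (k1 * s) + c2 * exp (k2 * s)) ->
  Rabs (RInt g a b) <= c1 * (exp (k1 * b) - exp (k1 * a)) / k1 + c2 * (exp (k2 * b) - exp (k2 * a)) / k2.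
Proof.
  intros Hab Hk1 Hk2 Hc Hb.
  apply (norm_RInt_le g (fun s => c1 * exp (k1 * s) + c2 * exp (k2 * s)) a b); auto.
  apply (RInt_correct (V:=R_CompleteNormedModule)), (ex_RInt_continuous (V:=R_CompleteNormedModule)). intros; apply Hc.
  apply (is_RInt_plus (fun s => c1 * exp (k1 * s)) (fun s => c2 * exp (k2 * s))); apply is_RInt_exp; auto.
Qed.


Lemma RInt_bound1 g a b c k : a <= b -> k <> 0 ->
  (forall s, continuous g s) ->
  (forall s, a <= s <= b -> Rabs (g s) <= c * exp (k * s)) ->
  Rabs (RInt g a b) <= c * (exp (k * b) - exp (k * a)) / k.
Proof.
  intros. eapply Rle_trans. apply (RInt_bound2 g a b c 0 k 1); auto.
  intros s Hs; rewrite Rmult_0_l, Rplus_0_r; auto. right; field; auto.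
Qed.

Lemma exRInt (g : R -> R) a b : (forall s, continuous g s) -> ex_RInt g a b.
Proof. intros; apply (ex_RInt_continuous (V:=R_CompleteNormedModule)); intros; auto. Qed.

Lemma improper0 g c k : 0 < k -> 0 <= c -> (forall s, continuous g s) ->
  (forall s, s <= 0 -> Rabs (g s) <= c * exp (k * s)) ->
  exists L, is_RInt_gen g (Rbar_locally m_infty) (at_point 0) L /\ Rabs L <= c / k.
Proof.
  intros Hk Hc Hg Hb.
  pose (F := fun a => RInt g a 0).
  assert (Hab : forall a b, a <= b <= 0 -> Rabs (RInt g a b) <= c * exp (k * b) / k).
  { intros a b Hab. eapply Rle_trans. apply (RInt_bound1 g a b c k); try lra; auto.
    intros s Hs; apply Hb; lra.
    pose proof (exp_pos (k*a)). unfold Rdiv. apply Rmult_le_compat_r. left; apply Rinv_0_lt_compat; lra. nra. }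
  assert (HF : forall a, a <= 0 -> Rabs (F a) <= c / k).
  { intros a Ha. unfold F. eapply Rle_trans. apply Hab; lra. rewrite Rmult_0_r, exp_0. lra. }
  pose (FF := filtermap F (Rbar_locally m_infty)).
  assert (HP : ProperFilter FF) by (apply filtermap_proper_filter; apply _).
  assert (Hcau : cauchy FF).
  { intros eps. pose (M := Rmin 0 (ln (eps * k / (c + 1)) / k)).
    exists (F M). exists M. intros a Ha.
    change (Rabs (F a - F M) < eps).
    assert (HM0 : M <= 0) by apply Rmin_l.
    unfold F. rewrite <- (RInt_Chasles g a M 0) by (apply exRInt; auto).
    assert (E : forall x y : R, plus x y - y = x) by (intros; unfold plus; simpl; ring). rewrite E.
    eapply Rle_lt_trans. apply Hab; lra.
    assert (He : exp (k * M) <= eps * k / (c + 1)).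
    { assert (0 < eps * k / (c+1)) by (apply Rdiv_lt_0_compat; [apply Rmult_lt_0_compat; [apply cond_pos|]|]; lra).
      rewrite <- (exp_ln (eps * k / (c+1))) by auto.
      assert (k * M <= ln (eps * k / (c + 1))).
      { assert (M <= ln (eps * k / (c + 1)) / k) by apply Rmin_r.
        apply Rmult_le_compat_l with (r := k) in H0; [|lra].
        replace (k * (ln (eps * k / (c + 1)) / k)) with (ln (eps * k / (c + 1))) in H0 by (field; lra). lra. }
      destruct H0 as [H0|H0]; [left; apply exp_increasing; auto| rewrite H0; lra]. }
    pose proof (cond_pos eps).
    apply Rmult_le_compat_l with (r := c) in He; [|lra].
    apply Rle_lt_trans with (c * (eps * k / (c + 1)) / k).
    unfold Rdiv at 1 3. apply Rmult_le_compat_r; [left; apply Rinv_0_lt_compat; lra|]. auto.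
    replace (c * (eps * k / (c + 1)) / k) with (eps * (c / (c+1))) by (field; lra).
    assert (c / (c + 1) < 1). { apply Rmult_lt_reg_r with (c+1). lra. field_simplify; lra. }
    nra. }
  pose proof (complete_cauchy FF HP Hcau) as Hlim.
  exists (lim FF). split.
  - intros P [eps HPe]. simpl.
    apply Filter_prod with (Q := fun a => ball (lim FF) eps (F a)) (R := fun b => b = 0).
    + apply (Hlim eps).
    + reflexivity.
    + intros x y Hx Hy. simpl. exists (F x). split; [|apply HPe; auto].
      subst y. unfold F. apply (RInt_correct (V:=R_CompleteNormedModule)), exRInt; auto.
  - apply Rnot_lt_le. intros Hlt.
    assert (He : 0 < Rabs (lim FF) - c / k) by lra.
    destruct (Hlim (mkposreal _ He)) as [M HM].
    pose (a := Rmin 0 (M - 1)).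
    assert (a < M) by (unfold a; pose proof (Rmin_r 0 (M - 1)); lra).
    specialize (HM a H). change (Rabs (F a - lim FF) < Rabs (lim FF) - c / k) in HM.
    pose proof (HF a (Rmin_l _ _)).
    pose proof (Rabs_triang_inv (lim FF) (F a)). rewrite Rabs_minus_sym in HM. lra.
Qed.

Lemma improper g c k : 0 < k -> 0 <= c -> (forall s, continuous g s) ->
  (forall s, s <= 0 -> Rabs (g s) <= c * exp (k * s)) ->
  exists L, Rabs L <= c / k /\ forall t, int_from_minfty g t = L + RInt g 0 t.
Proof.
  intros Hk Hc Hg Hb. destruct (improper0 g c k) as [L [HL1 HL2]]; auto.
  exists L. split; auto. intros t. unfold int_from_minfty.
  apply (is_RInt_gen_unique (V:=R_CompleteNormedModule)).
  apply (is_RInt_gen_Chasles (V:=R_NormedModule) g 0 L (RInt g 0 t)); auto.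
  apply is_RInt_gen_at_point. apply (RInt_correct (V:=R_CompleteNormedModule)), exRInt; auto.
Qed.

Lemma combine sig th I1 I2 S K1 K2 A W Z P Q :
  0 <= S -> 0 <= K1 -> 0 <= K2 -> 0 <= A -> 0 <= W -> W <= Z -> 0 <= P -> 0 <= Q ->
  Rabs sig <= S * (P + Q) -> Rabs th <= A * Q -> Rabs I1 <= K1 * W -> Rabs I2 <= K2 * Z ->
  Rabs (sig * I1 - th * I2) <= (S * K1 + A * K2) * (Z * Q + W * P).
Proof.
  intros. unfold Rminus. eapply Rle_trans; [apply Rabs_triang|]. rewrite Rabs_Ropp, !Rabs_mult.
  assert (Rabs sig * Rabs I1 <= S * (P + Q) * (K1 * W)) by (apply Rmult_le_compat; auto; apply Rabs_pos).
  assert (Rabs th * Rabs I2 <= A * Q * (K2 * Z)) by (apply Rmult_le_compat; auto; apply Rabs_pos).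
  assert (S * (P + Q) * (K1 * W) <= S * K1 * (Z * Q + W * P)).
  { replace (S * (P + Q) * (K1 * W)) with (S * K1 * (W * Q + W * P)) by ring.
    apply Rmult_le_compat_l. apply Rmult_le_pos; auto. nra. }
  assert (A * Q * (K2 * Z) <= A * K2 * (Z * Q + W * P)).
  { replace (A * Q * (K2 * Z)) with (A * K2 * (Z * Q)) by ring.
    apply Rmult_le_compat_l. apply Rmult_le_pos; auto. nra. }
  lra.
Qed.

Lemma Rpower_pos b x : 0 < b -> 0 < Rpower b x.
Proof. intros; unfold Rpower; apply exp_pos. Qed.

Lemma f_bound p lam b s : 0 < b ->
  Rabs (f_b p lam b s) <= Rabs lam * Rpower b (-2 * p) * exp (2 * s) + Rpower b (-4 * p) * exp (4 * s).
Proof.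
  intros Hb. unfold f_b. eapply Rle_trans; [apply Rabs_triang|].
  rewrite !Rabs_mult, Rabs_Ropp, (Rabs_pos_eq (exp _)), (Rabs_pos_eq (exp _)), (Rabs_pos_eq (Rpower b _)), (Rabs_pos_eq (Rpower b _)); try lra;
  try (left; apply exp_pos); left; apply Rpower_pos; auto.
Qed.

Lemma f_ex_derive p lam b s : ex_derive (f_b p lam b) s.
Proof. unfold f_b. auto_derive. auto. Qed.

Lemma Theta_ex_derive p s : 0 < p < 1 -> ex_derive (Theta_h p) s.
Proof. intros Hp. exists (Theta_h p s * psi p s). apply Theta_der; auto. Qed.

Lemma DTheta_ex_derive p s : 0 < p < 1 -> ex_derive (Derive (Theta_h p)) s.
Proof.
  intros Hp. exists (duu p s). eapply is_derive_ext. intros y; symmetry; apply DTheta; auto.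
  apply uu_der; auto.
Qed.

Lemma cont_of (g : R -> R) s : ex_derive g s -> continuous g s.
Proof. intros; apply (ex_derive_continuous (K:=R_AbsRing) (V:=R_NormedModule)); auto. Qed.

Lemma int_derive (g : R -> R) L t : (forall s, continuous g s) ->
  is_derive (fun t => L + RInt g 0 t) t (g t).
Proof.
  intros Hc. replace (g t) with (plus 0 (g t)) by (unfold plus; simpl; ring).
  apply (is_derive_plus (fun _ => L) (fun t => RInt g 0 t)).
  apply (is_derive_const (K:=R_AbsRing) (V:=R_NormedModule)).
  apply (is_derive_RInt (V:=R_NormedModule) g (fun t => RInt g 0 t) 0 t); auto.
  apply filter_forall. intros x. apply (RInt_correct (V:=R_CompleteNormedModule)), exRInt; auto.
Qed.

Lemma neg_exp_int c k t : 0 <= c -> k < 0 -> 0 <= t ->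
  c * (exp (k * t) - exp (k * 0)) / k <= c / (- k).
Proof.
  intros Hc Hk Ht. rewrite Rmult_0_r, exp_0. pose proof (exp_pos (k * t)).
  replace (c * (exp (k * t) - 1) / k) with (c * (1 - exp (k * t)) / (- k)) by (field; lra).
  unfold Rdiv. apply Rmult_le_compat_r. left; apply Rinv_0_lt_compat; lra. nra.
Qed.

Lemma pos_exp_int c k t : 0 <= c -> 0 < k -> 
  c * (exp (k * t) - exp (k * 0)) / k <= c * exp (k * t) / k.
Proof.
  intros Hc Hk. rewrite Rmult_0_r, exp_0.
  unfold Rdiv. apply Rmult_le_compat_r. left; apply Rinv_0_lt_compat; lra. nra.
Qed.

Section Main.
Variable p lam : R.
Hypothesis Hp : 0 < p < 1.
Variable Sigma : R -> R.
Hypothesis HS1 : forall t, ex_derive Sigma t.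
Variable S : R.
Hypothesis HS : 0 <= S.
Hypothesis HSb : forall t, Rabs (Sigma t) <= S * EE p t.
Variable b : R.
Hypothesis Hb : 1 <= b.

Definition B2 := Rpower b (-2 * p).
Definition B4 := Rpower b (-4 * p).
Definition g1 := fun s => f_b p lam b s * Derive (Theta_h p) s * Theta_h p s.
Definition g2 := fun s => f_b p lam b s * Sigma s * Theta_h p s.

Lemma B2_pos : 0 < B2. Proof. apply Rpower_pos; lra. Qed.
Lemma B4_pos : 0 < B4. Proof. apply Rpower_pos; lra. Qed.

Lemma g1_cont s : continuous g1 s.
Proof.
  apply cont_of. unfold g1. apply ex_derive_mult; [apply ex_derive_mult|].
  apply f_ex_derive. apply DTheta_ex_derive; auto. apply Theta_ex_derive; auto.
Qed.

Lemma g2_cont s : continuous g2 s.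
Proof.
  apply cont_of. unfold g2. apply ex_derive_mult; [apply ex_derive_mult|].
  apply f_ex_derive. apply HS1. apply Theta_ex_derive; auto.
Qed.

Lemma fb s : Rabs (f_b p lam b s) <= Rabs lam * B2 * exp (2 * s) + B4 * exp (4 * s).
Proof. apply f_bound; lra. Qed.

Lemma g1_abs s : Rabs (g1 s) <= Rabs (f_b p lam b s) * (Theta_h p s ^ 2 / p).
Proof.
  unfold g1. rewrite DTheta by auto. rewrite !Rabs_mult, (Rabs_pos_eq (Theta_h p s)) by (left; apply Theta_pos; auto).
  pose proof (uu_abs p Hp s). pose proof (Theta_pos p Hp s). pose proof (Rabs_pos (f_b p lam b s)).
  rewrite Rmult_assoc. apply Rmult_le_compat_l; auto.
  replace (Theta_h p s ^ 2 / p) with (Theta_h p s / p * Theta_h p s) by (field; lra).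
  apply Rmult_le_compat_r; lra.
Qed.

Lemma g1_neg s : s <= 0 -> Rabs (g1 s) <= (Rabs lam * B2 + B4) / p * exp (2 * s).
Proof.
  intros Hs. eapply Rle_trans; [apply g1_abs|].
  pose proof (fb s). pose proof (Theta_le1 p Hp s). pose proof (Theta_pos p Hp s).
  assert (exp (s / p) <= 1). { rewrite <- exp_0. apply exp_mono. unfold Rdiv.
    assert (0 < /p) by (apply Rinv_0_lt_compat; lra). nra. }
  assert (Theta_h p s ^ 2 <= 1) by nra.
  assert (exp (4 * s) <= exp (2 * s)) by (apply exp_mono; lra).
  pose proof (exp_pos (2*s)). pose proof (exp_pos (4*s)). pose proof B2_pos. pose proof B4_pos.
  pose proof (Rabs_pos lam). pose proof (Rabs_pos (f_b p lam b s)).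
  assert (Rabs (f_b p lam b s) <= (Rabs lam * B2 + B4) * exp (2 * s)).
  { eapply Rle_trans; [apply H|]. assert (0 <= Rabs lam * B2) by nra. nra. }
  assert (0 < /p) by (apply Rinv_0_lt_compat; lra).
  unfold Rdiv. replace ((Rabs lam * B2 + B4) * / p * exp (2 * s)) with ((Rabs lam * B2 + B4) * exp (2 * s) * / p) by ring.
  rewrite <- Rmult_assoc. apply Rmult_le_compat; try nra.
Qed.

Lemma g1_all s : Rabs (g1 s) <= AA p ^ 2 / p * Rabs lam * B2 * exp ((2 - 2 / p) * s)
                              + AA p ^ 2 / p * B4 * exp ((4 - 2 / p) * s).
Proof.
  eapply Rle_trans; [apply g1_abs|].
  pose proof (fb s). pose proof (Theta_le2 p Hp s). pose proof (Theta_pos p Hp s).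
  assert (Theta_h p s ^ 2 <= AA p ^ 2 * exp (-2 * s / p)).
  { replace (-2 * s / p) with (2 * (- s / p)) by (field; lra). rewrite exp_2.
    rewrite <- Rpow_mult_distr. apply pow_incr; lra. }
  pose proof (Rabs_pos (f_b p lam b s)).
  assert (0 < /p) by (apply Rinv_0_lt_compat; lra).
  eapply Rle_trans. apply Rmult_le_compat_l; auto. unfold Rdiv. apply Rmult_le_compat_r. lra. apply H2.
  eapply Rle_trans. apply Rmult_le_compat_r. apply Rmult_le_pos; [|lra]. apply Rmult_le_pos. apply pow_le, Rlt_le, AA_pos. left; apply exp_pos. apply H.
  replace ((2 - 2 / p) * s) with (2 * s + -2 * s / p) by (field; lra).
  replace ((4 - 2 / p) * s) with (4 * s + -2 * s / p) by (field; lra).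
  rewrite !exp_plus. right. field. lra.
Qed.

Lemma g2_abs s : Rabs (g2 s) <= S * (AA p + 1) * (Rabs lam * B2 * exp (2 * s) + B4 * exp (4 * s)).
Proof.
  unfold g2. rewrite !Rabs_mult, (Rabs_pos_eq (Theta_h p s)) by (left; apply Theta_pos; auto).
  pose proof (HSb s). pose proof (ThetaEE p Hp s). pose proof (Theta_pos p Hp s).
  pose proof (fb s). pose proof (Rabs_pos (f_b p lam b s)). pose proof (Rabs_pos (Sigma s)).
  pose proof (EE_pos p s).
  rewrite Rmult_assoc, Rmult_comm.
  apply Rmult_le_compat; try lra. apply Rmult_le_pos; lra.
  eapply Rle_trans. apply Rmult_le_compat_r. lra. apply H.
  replace (S * EE p s * Theta_h p s) with (S * (Theta_h p s * EE p s)) by ring.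
  apply Rmult_le_compat_l; auto.
Qed.

Lemma g2_neg s : s <= 0 -> Rabs (g2 s) <= S * (AA p + 1) * (Rabs lam * B2 + B4) * exp (2 * s).
Proof.
  intros Hs. eapply Rle_trans; [apply g2_abs|].
  assert (exp (4 * s) <= exp (2 * s)) by (apply exp_mono; lra).
  pose proof (exp_pos (2*s)). pose proof (exp_pos (4*s)). pose proof B2_pos. pose proof B4_pos.
  pose proof (Rabs_pos lam). pose proof (AA_pos p).
  replace (S * (AA p + 1) * (Rabs lam * B2 + B4) * exp (2 * s)) with (S * (AA p + 1) * ((Rabs lam * B2 + B4) * exp (2 * s))) by ring. apply Rmult_le_compat_l. apply Rmult_le_pos; lra.
  assert (0 <= Rabs lam * B2) by nra. nra.
Qed.


Lemma pos_facts : 0 <= Rabs lam * B2 + B4 /\ 0 <= Rabs lam * B2 /\ 0 < AA p /\ 0 < / p.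
Proof.
  pose proof B2_pos; pose proof B4_pos; pose proof (Rabs_pos lam); pose proof (AA_pos p).
  assert (0 < /p) by (apply Rinv_0_lt_compat; lra). repeat split; nra.
Qed.

Lemma I1_repr : exists L1, Rabs L1 <= (Rabs lam * B2 + B4) / (2 * p) /\
  forall t, int_from_minfty g1 t = L1 + RInt g1 0 t.
Proof.
  destruct pos_facts as [H1 [H2 [H3 H4]]].
  destruct (improper g1 ((Rabs lam * B2 + B4) / p) 2) as [L [HL1 HL2]]; try lra.
  unfold Rdiv; apply Rmult_le_pos; lra. apply g1_cont. apply g1_neg.
  exists L; split; auto. eapply Rle_trans; [apply HL1|]. right; field; lra.
Qed.

Lemma I2_repr : exists L2, Rabs L2 <= S * (AA p + 1) * (Rabs lam * B2 + B4) / 2 /\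
  forall t, int_from_minfty g2 t = L2 + RInt g2 0 t.
Proof.
  destruct pos_facts as [H1 [H2 [H3 H4]]].
  destruct (improper g2 (S * (AA p + 1) * (Rabs lam * B2 + B4)) 2) as [L [HL1 HL2]]; try lra.
  apply Rmult_le_pos; [apply Rmult_le_pos|]; lra. apply g2_cont. apply g2_neg.
  exists L; split; auto.
Qed.

Lemma R1_small t : 0 <= t -> p < 1 / 2 ->
  Rabs (RInt g1 0 t) <= AA p ^ 2 / p / (2 / p - 2) * (Rabs lam * B2) + AA p ^ 2 / p / (2 / p - 4) * B4.
Proof.
  intros Ht Hp2. destruct pos_facts as [H1 [H2 [H3 H4]]].
  assert (Hk1 : 2 - 2 / p < 0). { apply Rmult_lt_reg_r with p. lra. field_simplify; lra. }
  assert (Hk2 : 4 - 2 / p < 0). { apply Rmult_lt_reg_r with p. lra. field_simplify; lra. }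
  assert (HA : 0 <= AA p ^ 2 / p). { unfold Rdiv; apply Rmult_le_pos; [apply pow_le|]; lra. }
  pose proof B4_pos.
  eapply Rle_trans. apply (RInt_bound2 g1 0 t (AA p ^ 2 / p * Rabs lam * B2) (AA p ^ 2 / p * B4)
      (2 - 2 / p) (4 - 2 / p)); try lra. apply g1_cont. intros; apply g1_all.
  apply Rplus_le_compat.
  eapply Rle_trans. apply neg_exp_int; auto. rewrite Rmult_assoc; apply Rmult_le_pos; lra. right; field; lra.
  eapply Rle_trans. apply neg_exp_int; auto. apply Rmult_le_pos; lra. right; field; lra.
Qed.

Lemma R1_large t : 0 <= t ->
  Rabs (RInt g1 0 t) <= AA p ^ 2 / p / (2 / p - 2) * (Rabs lam * B2) + AA p ^ 2 / p * (p / 2) * (B4 * exp (4 * t)).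
Proof.
  intros Ht. destruct pos_facts as [H1 [H2 [H3 H4]]].
  assert (Hk1 : 2 - 2 / p < 0). { apply Rmult_lt_reg_r with p. lra. field_simplify; lra. }
  assert (Hk2 : - 2 / p < 0). { unfold Rdiv. lra. }
  assert (HA : 0 <= AA p ^ 2 / p). { unfold Rdiv; apply Rmult_le_pos; [apply pow_le|]; lra. }
  pose proof B4_pos. pose proof (exp_pos (4 * t)).
  eapply Rle_trans. apply (RInt_bound2 g1 0 t (AA p ^ 2 / p * Rabs lam * B2) (AA p ^ 2 / p * B4 * exp (4 * t))
      (2 - 2 / p) (- 2 / p)); try lra. apply g1_cont.
  intros s Hs. eapply Rle_trans. apply g1_all. apply Rplus_le_compat_l.
  replace ((4 - 2 / p) * s) with (4 * s + - 2 / p * s) by (field; lra). rewrite exp_plus.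
  replace (AA p ^ 2 / p * B4 * (exp (4 * s) * exp (-2 / p * s))) with
     (AA p ^ 2 / p * B4 * exp (-2 / p * s) * exp (4 * s)) by ring.
  replace (AA p ^ 2 / p * B4 * exp (4 * t) * exp (-2 / p * s)) with
     (AA p ^ 2 / p * B4 * exp (-2 / p * s) * exp (4 * t)) by ring.
  apply Rmult_le_compat_l. apply Rmult_le_pos; [apply Rmult_le_pos|left; apply exp_pos]; lra.
  apply exp_mono; lra.
  apply Rplus_le_compat.
  eapply Rle_trans. apply neg_exp_int; auto. rewrite Rmult_assoc; apply Rmult_le_pos; lra. right; field; lra.
  eapply Rle_trans. apply neg_exp_int; auto. apply Rmult_le_pos; [apply Rmult_le_pos|]; lra. right; field; lra.
Qed.

Lemma R2_bound t : 0 <= t ->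
  Rabs (RInt g2 0 t) <= S * (AA p + 1) * (Rabs lam * B2) * (exp (2 * t) - 1) / 2
                      + S * (AA p + 1) * B4 * (exp (4 * t) - 1) / 4.
Proof.
  intros Ht. eapply Rle_trans.
  apply (RInt_bound2 g2 0 t (S * (AA p + 1) * (Rabs lam * B2)) (S * (AA p + 1) * B4) 2 4); try lra.
  apply g2_cont. intros s _. eapply Rle_trans; [apply g2_abs|]. right; ring.
  rewrite !Rmult_0_r, exp_0. right; reflexivity.
Qed.


Lemma gamma_repr L1 L2 :
  (forall t, int_from_minfty g1 t = L1 + RInt g1 0 t) ->
  (forall t, int_from_minfty g2 t = L2 + RInt g2 0 t) ->
  forall t, gamma_h p lam b Sigma t = Sigma t * (L1 + RInt g1 0 t) - uu p t * (L2 + RInt g2 0 t).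
Proof.
  intros h1 h2 t. unfold gamma_h. fold g1. fold g2. rewrite h1, h2, DTheta; auto.
Qed.

Lemma gamma_der L1 L2 :
  (forall t, int_from_minfty g1 t = L1 + RInt g1 0 t) ->
  (forall t, int_from_minfty g2 t = L2 + RInt g2 0 t) ->
  forall t, Derive (gamma_h p lam b Sigma) t =
     Derive Sigma t * (L1 + RInt g1 0 t) - duu p t * (L2 + RInt g2 0 t).
Proof.
  intros h1 h2 t. apply is_derive_unique.
  eapply is_derive_ext. intros y; symmetry; apply gamma_repr; auto.
  replace (Derive Sigma t * (L1 + RInt g1 0 t) - duu p t * (L2 + RInt g2 0 t)) with
    (minus (plus (mult (Derive Sigma t) (L1 + RInt g1 0 t)) (mult (Sigma t) (g1 t)))
           (plus (mult (duu p t) (L2 + RInt g2 0 t)) (mult (uu p t) (g2 t)))).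
  apply (is_derive_minus (fun t => Sigma t * (L1 + RInt g1 0 t)) (fun t => uu p t * (L2 + RInt g2 0 t))).
  apply (is_derive_mult Sigma (fun t => L1 + RInt g1 0 t)). apply Derive_correct, HS1.
  apply int_derive, g1_cont. intros; apply Rmult_comm.
  apply (is_derive_mult (uu p) (fun t => L2 + RInt g2 0 t)). apply uu_der; auto.
  apply int_derive, g2_cont. intros; apply Rmult_comm.
  unfold minus, plus, mult, opp; simpl. unfold g1, g2. rewrite DTheta by auto. ring.
Qed.

End Main.

Lemma exp_cmp p b t T a k : 0 < p -> 1 <= b -> 0 < a -> 0 < T -> 0 < k <= 4 -> t <= T + a * p * ln b ->
  Rpower b (- k * p) * exp (k * t) <= exp (4 * T) * Rpower b (- k * p * (1 - a)).
Proof.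
  intros Hp Hb Ha HT Hk Ht. unfold Rpower. rewrite <- !exp_plus. apply exp_mono.
  assert (0 <= ln b) by (rewrite <- ln_1; apply ln_le; lra).
  assert (k * t <= k * (T + a * p * ln b)) by (apply Rmult_le_compat_l; lra).
  nra.
Qed.

Lemma Rpower_exp_le b x y : 1 <= b -> x <= y -> Rpower b x <= Rpower b y.
Proof. intros; apply Rle_Rpower; auto. Qed.

Theorem mainTheorem4 (p lam : R) (Sigma : R -> R) :
  0 < p < 1 ->
  is_Sigma p Sigma ->
  forall (T a : R), 0 < T -> 0 < a < p / (1 + p) ->
  exists (b0 C : R), 0 < b0 /\ 0 < C /\
    forall (b t : R), b0 <= b ->
      a * p * ln b <= t <= T + a * p * ln b ->
      (p < 1 / 2 ->
         Rabs (gamma_h p lam b Sigma t) <= C * bound_small p lam b t a /\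
         Rabs (Derive (gamma_h p lam b Sigma) t) <= C * bound_small p lam b t a) /\
      (1 / 2 <= p ->
         Rabs (gamma_h p lam b Sigma t) <= C * bound_large p lam b t a /\
         Rabs (Derive (gamma_h p lam b Sigma) t) <= C * bound_large p lam b t a).
Proof.
  intros Hp HSig T a HT Ha.
  destruct HSig as [HS1 [HS2 [_ HW0]]].
  assert (HW : forall t, uu p t * Derive Sigma t - duu p t * Sigma t = 1).
  { intro t. rewrite <- DTheta, <- D2Theta by auto. apply HW0. }
  destruct (Sig_bound p Hp Sigma HS1 HW) as [S1 [HS1p HS1b]].
  destruct (Sigp_bound p Hp Sigma HS1 HS2 HW) as [S2 [HS2p HS2b]].
  set (S := S1 + S2).
  assert (HS : 0 <= S) by (unfold S; lra).
  assert (HSb : forall t, Rabs (Sigma t) <= S * EE p t).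
  { intros t. pose proof (HS1b t). pose proof (EE_pos p t). unfold S. nra. }
  assert (HSb' : forall t, Rabs (Derive Sigma t) <= S * EE p t).
  { intros t. pose proof (HS2b t). pose proof (EE_pos p t). unfold S. nra. }
  assert (Hip : 0 < / p) by (apply Rinv_0_lt_compat; lra).
  pose proof (AA_pos p) as HAA.
  set (D := / p ^ 2 + / p).
  assert (HD : 0 < D). { unfold D. assert (0 < / p ^ 2) by (apply Rinv_0_lt_compat, pow_lt; lra). lra. }
  set (A := AA p / p + AA p * D).
  assert (HA : 0 <= A). { unfold A, Rdiv. assert (0 <= AA p * / p) by nra. assert (0 <= AA p * D) by nra. lra. }
  set (K2 := S * (AA p + 1) * exp (4 * T)).
  assert (HK2 : 0 <= K2). { unfold K2. pose proof (exp_pos (4*T)). apply Rmult_le_pos; [apply Rmult_le_pos|]; lra. }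
  set (c1 := AA p ^ 2 / p / (2 / p - 2)).
  set (c2 := AA p ^ 2 / p / (2 / p - 4)).
  set (c3 := AA p ^ 2 / p * (p / 2)).
  assert (Hk1 : 0 < 2 / p - 2). { apply Rmult_lt_reg_r with p. lra. field_simplify; lra. }
  assert (HA2 : 0 <= AA p ^ 2 / p). { unfold Rdiv; apply Rmult_le_pos; [apply pow_le|]; lra. }
  assert (Hc1 : 0 <= c1). { unfold c1, Rdiv. apply Rmult_le_pos. exact HA2. left; apply Rinv_0_lt_compat; lra. }
  assert (Hc3 : 0 <= c3). { unfold c3. apply Rmult_le_pos; lra. }
  set (K1s := / (2 * p) + c1 + c2).
  set (K1l := / (2 * p) + c1 + c3).
  assert (Hi2p : 0 < / (2 * p)) by (apply Rinv_0_lt_compat; lra).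
  assert (HK1l : 0 <= K1l) by (unfold K1l; lra).
  pose proof (exp_pos (4 * T)) as H4T.
  assert (H4T1 : 1 <= exp (4 * T)). { rewrite <- exp_0. apply exp_mono. lra. }
  set (C := S * (Rabs K1s + K1l * exp (4 * T)) + A * K2 + 1).
  assert (HC1 : S * K1s + A * K2 <= C).
  { unfold C. pose proof (Rle_abs K1s). assert (0 <= K1l * exp (4 * T)) by nra. nra. }
  assert (HC2 : S * (K1l * exp (4 * T)) + A * K2 <= C).
  { unfold C. pose proof (Rabs_pos K1s). nra. }
  exists 1, C. split; [lra|]. split.
  { unfold C. pose proof (Rabs_pos K1s). assert (0 <= K1l * exp (4 * T)) by nra.
    assert (0 <= S * (Rabs K1s + K1l * exp (4 * T))) by (apply Rmult_le_pos; lra). nra. }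
  intros b t Hb Ht.
  assert (Hlnb : 0 <= ln b) by (rewrite <- ln_1; apply ln_le; lra).
  assert (Ht0 : 0 <= t). { assert (0 <= a * p * ln b) by (apply Rmult_le_pos; [apply Rmult_le_pos|]; lra). lra. }
  destruct (I1_repr p lam Hp b Hb) as [L1 [HL1 h1]].
  destruct (I2_repr p lam Hp Sigma HS1 S HS HSb b Hb) as [L2 [HL2 h2]].
  rewrite (gamma_der p lam Hp Sigma HS1 b L1 L2 h1 h2 t).
  rewrite (gamma_repr p lam Hp Sigma b L1 L2 h1 h2 t).
  pose proof (B2_pos p b Hb) as HB2. pose proof (B4_pos p b Hb) as HB4.
  set (B2' := Rpower b (-2 * p * (1 - a))).
  set (B4' := Rpower b (-4 * p * (1 - a))).
  set (P := exp (t / p)). set (Q := exp (- t / p)).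
  pose proof (exp_pos (t/p)) as HP. pose proof (exp_pos (-t/p)) as HQ. fold P in HP. fold Q in HQ.
  pose proof (Rabs_pos lam) as Hlam.
  assert (HB2le : B2 p b <= B2'). { unfold B2, B2'. apply Rle_Rpower; auto. nra. }
  assert (HB4le : B4 p b <= B4'). { unfold B4, B4'. apply Rle_Rpower; auto. nra. }
  assert (HB2e : B2 p b * exp (2 * t) <= exp (4 * T) * B2').
  { unfold B2, B2'. replace (-2 * p) with (- 2 * p) by ring. replace (-2 * p * (1 - a)) with (- 2 * p * (1 - a)) by ring.
    apply exp_cmp; lra. }
  assert (HB4e : B4 p b * exp (4 * t) <= exp (4 * T) * B4').
  { unfold B4, B4'. replace (-4 * p) with (- 4 * p) by ring. replace (-4 * p * (1 - a)) with (- 4 * p * (1 - a)) by ring.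
    apply exp_cmp; lra. }
  assert (He2 : 1 <= exp (2 * t)) by (rewrite <- exp_0; apply exp_mono; lra).
  assert (He4 : 1 <= exp (4 * t)) by (rewrite <- exp_0; apply exp_mono; lra).
  set (Z := Rabs lam * B2' + B4').
  set (Ws := Rabs lam * B2 p b + B4 p b).
  set (Wl := Rabs lam * B2 p b + B4').
  assert (HWs : 0 <= Ws) by (unfold Ws; nra).
  assert (HWl : 0 <= Wl) by (unfold Wl; nra).
  assert (HWsZ : Ws <= Z) by (unfold Ws, Z; nra).
  assert (HWlZ : Wl <= Z) by (unfold Wl, Z; nra).
  assert (HI2 : Rabs (L2 + RInt (g2 p lam Sigma b) 0 t) <= K2 * Z).
  { eapply Rle_trans; [apply Rabs_triang|].
    pose proof (R2_bound p lam Hp Sigma HS1 S HS HSb b Hb t Ht0) as HR2.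
    set (U := S * (AA p + 1)). assert (HU : 0 <= U) by (unfold U; nra).
    fold U in HL2, HR2.
    assert (Rabs L2 + Rabs (RInt (g2 p lam Sigma b) 0 t) <= U * (Rabs lam * (B2 p b * exp (2 * t)) + B4 p b * exp (4 * t))).
    { assert (U * Ws / 2 + U * (Rabs lam * B2 p b) * (exp (2 * t) - 1) / 2 + U * B4 p b * (exp (4 * t) - 1) / 4
             <= U * (Rabs lam * (B2 p b * exp (2 * t)) + B4 p b * exp (4 * t))).
      { unfold Ws. assert (0 <= U * B4 p b * (exp (4 * t) - 1)) by (apply Rmult_le_pos; nra). assert (0 <= U * (Rabs lam * (B2 p b * exp (2 * t)))) by (apply Rmult_le_pos; [lra|apply Rmult_le_pos; nra]). assert (0 <= U * B4 p b * exp (4 * t)) by (apply Rmult_le_pos; [apply Rmult_le_pos|]; lra). lra. }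
      fold Ws in HL2. lra. }
    unfold K2. fold U.
    assert (U * (Rabs lam * (B2 p b * exp (2 * t)) + B4 p b * exp (4 * t)) <= U * (exp (4 * T) * Z)).
    { apply Rmult_le_compat_l; auto. unfold Z. nra. }
    lra. }
  assert (Hsig : Rabs (Sigma t) <= S * (P + Q)) by (apply HSb).
  assert (Hsig' : Rabs (Derive Sigma t) <= S * (P + Q)) by (apply HSb').
  assert (Hth1 : Rabs (uu p t) <= A * Q).
  { pose proof (uu_abs p Hp t). pose proof (Theta_le2 p Hp t). fold Q in H0.
    eapply Rle_trans; [apply H|]. unfold A, Rdiv.
    assert (Theta_h p t * / p <= AA p * Q * / p) by (apply Rmult_le_compat_r; lra).
    assert (0 <= AA p * D * Q) by (apply Rmult_le_pos; [apply Rmult_le_pos|]; lra). lra. }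
  assert (Hth2 : Rabs (duu p t) <= A * Q).
  { pose proof (duu_abs p Hp t). pose proof (Theta_le2 p Hp t). fold Q in H0. fold D in H.
    eapply Rle_trans; [apply H|]. unfold A, Rdiv.
    assert (Theta_h p t * D <= AA p * Q * D) by (apply Rmult_le_compat_r; lra).
    assert (0 <= AA p * / p * Q) by nra. nra. }
  split.
  - intros Hsm.
    assert (Hk2 : 0 < 2 / p - 4). { apply Rmult_lt_reg_r with p. lra. field_simplify; lra. }
    assert (Hc2 : 0 <= c2). { unfold c2, Rdiv. apply Rmult_le_pos. exact HA2. left; apply Rinv_0_lt_compat; lra. }
    assert (HI1 : Rabs (L1 + RInt (g1 p lam b) 0 t) <= K1s * Ws).
    { eapply Rle_trans; [apply Rabs_triang|].
      pose proof (R1_small p lam Hp b Hb t Ht0 Hsm) as HR1. fold c1 c2 in HR1.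
      assert (HL1' : Rabs L1 <= / (2 * p) * Ws) by (unfold Ws; eapply Rle_trans; [apply HL1|]; right; unfold Rdiv; ring).
      assert (0 <= c1 * B4 p b) by (apply Rmult_le_pos; lra). assert (0 <= c2 * (Rabs lam * B2 p b)) by (apply Rmult_le_pos; [lra|apply Rmult_le_pos; lra]). unfold K1s, Ws in *. lra. }
    assert (Hbd : bound_small p lam b t a = Z * Q + Ws * P) by reflexivity.
    rewrite Hbd.
    assert (HB : 0 <= Z * Q + Ws * P) by (assert (0 <= Z) by lra; nra).
    split.
    + eapply Rle_trans. apply (combine _ _ _ _ S K1s K2 A Ws Z P Q); auto; try lra.
      unfold K1s; lra. apply Rmult_le_compat_r; auto.
    + eapply Rle_trans. apply (combine _ _ _ _ S K1s K2 A Ws Z P Q); auto; try lra.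
      unfold K1s; lra. apply Rmult_le_compat_r; auto.
  - intros Hlg.
    assert (HI1 : Rabs (L1 + RInt (g1 p lam b) 0 t) <= (K1l * exp (4 * T)) * Wl).
    { eapply Rle_trans; [apply Rabs_triang|].
      pose proof (R1_large p lam Hp b Hb t Ht0) as HR1. fold c1 c3 in HR1.
      assert (HL1' : Rabs L1 <= / (2 * p) * Ws) by (unfold Ws; eapply Rle_trans; [apply HL1|]; right; unfold Rdiv; ring).
      assert (Rabs L1 + Rabs (RInt (g1 p lam b) 0 t) <= K1l * (Rabs lam * B2 p b + B4 p b * exp (4 * t))).
      { assert (B4 p b <= B4 p b * exp (4 * t)) by nra.
        assert (/ (2 * p) * B4 p b <= / (2 * p) * (B4 p b * exp (4 * t))) by (apply Rmult_le_compat_l; lra).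
        assert (0 <= c1 * (B4 p b * exp (4 * t))) by (apply Rmult_le_pos; [lra|apply Rmult_le_pos; lra]).
        assert (0 <= c3 * (Rabs lam * B2 p b)) by (apply Rmult_le_pos; [lra|apply Rmult_le_pos; lra]).
        unfold K1l, Ws in *. lra. }
      assert (K1l * (Rabs lam * B2 p b + B4 p b * exp (4 * t)) <= K1l * exp (4 * T) * Wl).
      { rewrite Rmult_assoc. apply Rmult_le_compat_l; auto. unfold Wl.
        assert (Rabs lam * B2 p b <= exp (4 * T) * (Rabs lam * B2 p b)) by (assert (0 <= Rabs lam * B2 p b) by nra; nra).
        nra. }
      lra. }
    assert (Hbd : bound_large p lam b t a = Z * Q + Wl * P) by reflexivity.
    rewrite Hbd.
    assert (HB : 0 <= Z * Q + Wl * P) by (assert (0 <= Z) by lra; nra).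
    split.
    + eapply Rle_trans. apply (combine _ _ _ _ S (K1l * exp (4 * T)) K2 A Wl Z P Q); auto; try lra.
      nra. apply Rmult_le_compat_r; auto.
    + eapply Rle_trans. apply (combine _ _ _ _ S (K1l * exp (4 * T)) K2 A Wl Z P Q); auto; try lra.
      nra. apply Rmult_le_compat_r; auto.
Qed.
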